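(* Let $k$ be a difference field of characteristic $0$ and $R=k\{y_1,\ldots,y_n\}$. If $I,J$ are monomial $\sigma$-ideals of $R$, then $\langle I+J\rangle_r=\langle I\rangle_r+\langle J\rangle_r$.
   Context: A difference field is a field $k$ with a ring endomorphism $\sigma$; $R=k\{y_1,\ldots,y_n\}$ is the polynomial ring over $k$ in the variables $\sigma^j(y_i)$, with $\sigma$ extended naturally. For $p=\sum_ic_ix^i\in\mathbb{N}[x]$ and $a\in R$, $a^p=\prod_i(\sigma^i(a))^{c_i}$; monomials are $\mathbf{y}^{\mathbf{u}}=y_1^{u_1}\cdots y_n^{u_n}$ with $\mathbf{u}\in\mathbb{N}[x]^n$. A $\sigma$-ideal is an ideal stable under $\sigma$; monomial if generated by monomials; well-mixed if $ab\in I\Rightarrow a\sigma(b)\in I$. $\langle F\rangle_r$ is the smallest radical well-mixed $\sigma$-ideal containing $F$. *)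

(* Defs.v *)
From HB Require Import structures.
From mathcomp Require Import all_boot all_order all_algebra.
From mathcomp Require Import finmap.
From mathcomp.multinomials Require Import monalg.

Set Implicit Arguments.
Unset Strict Implicit.
Unset Printing Implicit Defensive.

Import GRing.Theory.
Local Open Scope ring_scope.

(* The variables sigma^j(y_i), i < n, j : nat, indexed by (i, j). *)
Definition dvar (n : nat) : choiceType := ('I_n * nat)%type.

(* Monomials y^u, u in N[x]^n: finitely supported exponent maps on the variables. *)
Definition dmonom (n : nat) := {cmonom (dvar n)}.

(* R = k{y_1,...,y_n}: polynomial ring over k in the variables sigma^j(y_i). *)
Definition dpoly (k : fieldType) (n : nat) := {malg k[dmonom n]}.

Definition dX (k : fieldType) (n : nat) (v : dvar n) : dpoly k n :=
  << (ucm v : dmonom n) >>.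

Definition dmono (k : fieldType) (n : nat) (m : dmonom n) : dpoly k n := << m >>.

(* Natural extension of sigma to R:
   sum c_m prod_v v^(m v)  |->  sum sigma(c_m) prod_v (sigma v)^(m v),
   with sigma(sigma^j y_i) = sigma^(j+1) y_i. *)
Definition dsigma (k : fieldType) (n : nat) (s : {rmorphism k -> k})
    (p : dpoly k n) : dpoly k n :=
  mmap (fun c : k => (s c)%:MP : dpoly k n)
       (fun m : dmonom n =>
          \prod_(v <- finsupp (m : {fsfun of _ : dvar n => 0%N}))
             dX k (v.1, v.2.+1) ^+ (m v))
       p.

Section Ideals.
Variables (k : fieldType) (n : nat) (s : {rmorphism k -> k}).
Local Notation R := (dpoly k n).

Definition is_ideal (I : R -> Prop) : Prop :=
  [/\ I 0, (forall a b, I a -> I b -> I (a + b)) & (forall r a, I a -> I (r * a))].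

Definition is_sigma_ideal (I : R -> Prop) : Prop :=
  is_ideal I /\ forall a, I a -> I (dsigma s a).

Definition is_well_mixed (I : R -> Prop) : Prop :=
  forall a b, I (a * b) -> I (a * dsigma s b).

Definition is_radical (I : R -> Prop) : Prop :=
  forall a m, I (a ^+ m.+1) -> I a.

Definition ideal_gen (F : R -> Prop) (x : R) : Prop :=
  forall J, is_ideal J -> (forall y, F y -> J y) -> J x.

Definition is_monomial_sigma_ideal (I : R -> Prop) : Prop :=
  is_sigma_ideal I /\
  exists M : dmonom n -> Prop,
    forall x, I x <-> ideal_gen (fun p => exists2 m, M m & p = dmono k m) x.

Definition rwm_closure (F : R -> Prop) (x : R) : Prop :=
  forall J, is_sigma_ideal J -> is_well_mixed J -> is_radical J ->
    (forall y, F y -> J y) -> J x.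

Definition ideal_add (I J : R -> Prop) (x : R) : Prop :=
  exists a b, [/\ I a, J b & x = a + b].
End Ideals.

(* Main.v *)
Require Import Defs.
From HB Require Import structures.
From mathcomp Require Import all_boot all_order all_algebra.
From mathcomp Require Import finmap.
From mathcomp.multinomials Require Import monalg.
From Stdlib Require Import ClassicalEpsilon.
From mathcomp Require Import zify ring.
Set Implicit Arguments.
Unset Strict Implicit.
Unset Printing Implicit Defensive.
Import GRing.Theory.
Local Open Scope fset_scope.
Local Open Scope ring_scope.
Local Notation "1" := (@mone _) : monom_scope.
Local Notation "x * y" := (mmul x y) : monom_scope.

Section Dom.
Variables (I : choiceType) (code : I -> nat) (code_inj : injective code).

Fixpoint pr0 (i : nat) : nat :=
  match i with 0 => 2 | i'.+1 => sval (prime_above (pr0 i')) end.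

Lemma pr_ex : {f : nat -> nat | prime (f 0) /\ forall i, (f i < f i.+1)%N /\ prime (f i.+1)}.
Proof.
exists pr0; split; first by [].
move=> i; rewrite [pr0 i.+1]/=. by destruct (prime_above (pr0 i)) as [p h1 h2].
Qed.

Definition pr := sval pr_ex.
Lemma pr_S i : (pr i < pr i.+1)%N /\ prime (pr i.+1).
Proof. exact: ((proj2_sig pr_ex).2 i). Qed.
Lemma pr_prime i : prime (pr i).
Proof. case: i => [|i]; last exact: (pr_S i).2. exact: (proj2_sig pr_ex).1. Qed.

Lemma pr_lt i j : (i < j)%N -> (pr i < pr j)%N.
Proof.
elim: j => [//|j IH]; rewrite ltnS leq_eqVlt => /orP[/eqP->|/IH h].
  exact: (pr_S j).1.
exact: ltn_trans h (pr_S j).1.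
Qed.
Lemma pr_inj : injective pr.
Proof.
by move=> i j e; case: (ltngtP i j) => [/pr_lt|/pr_lt|//]; rewrite e ltnn.
Qed.

Definition wv (v : I) := pr (code v).

Definition Nm (m : cmonom I) : nat := (\prod_(v <- finsupp m) wv v ^ m v)%N.

Lemma NmEw (m : cmonom I) (d : {fset I}) : finsupp m `<=` d ->
  Nm m = (\prod_(v <- d) wv v ^ m v)%N.
Proof.
move=> le; rewrite /Nm (big_fset_incl _ le) //.
by move=> i _; rewrite -cmE_neq0 negbK => /eqP ->.
Qed.

Lemma NmM (m1 m2 : cmonom I) : Nm (m1 * m2)%M = (Nm m1 * Nm m2)%N.
Proof.
rewrite (@NmEw (m1 * m2)%M (finsupp m1 `|` finsupp m2)); last by rewrite mdomD.
rewrite (NmEw (fsubsetUl (finsupp m1) (finsupp m2))) (NmEw (fsubsetUr (finsupp m1) (finsupp m2))).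
by rewrite -big_split /=; apply/eq_bigr => i _; rewrite cmM expnD.
Qed.

Lemma prodw_gt0 (s : seq I) (m : cmonom I) : (0 < \prod_(v <- s) wv v ^ m v)%N.
Proof.
elim: s => [|b s IH]; rewrite ?big_nil ?big_cons // muln_gt0 IH andbT.
by rewrite expn_gt0 prime_gt0 // pr_prime.
Qed.

Lemma Nm_gt0 (m : cmonom I) : (0 < Nm m)%N.
Proof. exact: prodw_gt0. Qed.

Lemma logn_prodw p (s : seq I) (m : cmonom I) :
  logn p (\prod_(v <- s) wv v ^ m v) = (\sum_(v <- s) logn p (wv v ^ m v))%N.
Proof.
elim: s => [|a s IH]; first by rewrite !big_nil logn1.
rewrite !big_cons lognM ?IH ?prodw_gt0 //.
by rewrite expn_gt0 prime_gt0 // pr_prime.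
Qed.

Lemma logn_wv w0 v e : logn (wv w0) (wv v ^ e) = if v == w0 then e else 0%N.
Proof.
case: eqP => [->|ne]; first by rewrite pfactorK // pr_prime.
apply: logn_coprime; apply: coprimeXr; rewrite prime_coprime ?pr_prime //.
rewrite dvdn_prime2 ?pr_prime //; apply/negP => /eqP /pr_inj /code_inj e1.
by apply: ne; rewrite e1.
Qed.

Lemma Nm_inj : injective Nm.
Proof.
move=> m1 m2 e; apply/eqP/cmP => w0.
set d := finsupp m1 `|` finsupp m2.
have h (m : cmonom I) : finsupp m `<=` d -> logn (wv w0) (Nm m) = if w0 \in d then m w0 else 0%N.
  move=> le; rewrite (NmEw le) logn_prodw.
  under eq_bigr do rewrite logn_wv.
  case: ifP => w0d.
    rewrite (bigD1_seq w0) //= eqxx big1 ?addn0 // => i /negbTE -> //.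
  by rewrite big_seq big1 // => i id; case: eqP => // ei; rewrite -ei id in w0d.
have := h m1 (fsubsetUl _ _); have := h m2 (fsubsetUr _ _); rewrite e => -> .
case: ifP => // w0d _.
have : w0 \notin finsupp m1 by apply/negP => i; rewrite /d in_fsetU i in w0d.
have : w0 \notin finsupp m2 by apply/negP => i; rewrite /d in_fsetU i orbT in w0d.
by rewrite -!cmE_eq0 => /eqP -> /eqP ->.
Qed.

Lemma seq_max (s : seq (cmonom I)) : s = [::] \/
  exists2 x, x \in s & forall y, y \in s -> (Nm y <= Nm x)%N.
Proof.
elim: s => [|a s [->|[x xs hx]]]; first by left.
  by right; exists a; rewrite ?mem_seq1 // => y; rewrite mem_seq1 => /eqP->.
right; case: (leqP (Nm a) (Nm x)) => ax.
  exists x; first by rewrite inE xs orbT.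
  by move=> y; rewrite inE => /orP[/eqP->|/hx].
exists a; first by rewrite inE eqxx.
move=> y; rewrite inE => /orP[/eqP->//|/hx yx]; exact: (leq_trans yx (ltnW ax)).
Qed.

Lemma msupp_max (R : zmodType) (f : {malg R[cmonom I]}) : f != 0 ->
  exists2 x, x \in msupp f & forall y, y \in msupp f -> (Nm y <= Nm x)%N.
Proof.
rewrite -msupp_eq0 => /fset0Pn [x0 hx0].
case: (seq_max (msupp f)) => // e.
by move: hx0; rewrite -[x0 \in msupp f]/(x0 \in (msupp f : seq _)) e.
Qed.

Variable R : idomainType.

Lemma malg_mul_neq0 (f g : {malg R[cmonom I]}) : f != 0 -> g != 0 -> f * g != 0.
Proof.
move=> fn gn.
have [mf mff hf] := msupp_max fn.
have [mg mgg hg] := msupp_max gn.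
have key k1 k2 : k1 \in msupp f -> k2 \in msupp g -> (k1 * k2)%M = (mf * mg)%M ->
    k1 = mf /\ k2 = mg.
  move=> k1f k2g e.
  have := hf _ k1f; have := hg _ k2g; move/(congr1 Nm): e; rewrite !NmM.
  have := Nm_gt0 k1; have := Nm_gt0 k2; have := Nm_gt0 mf; have := Nm_gt0 mg.
  move=> p1 p2 p3 p4 e l1 l2.
  have e1 : Nm k1 = Nm mf by nia.
  have e2 : Nm k2 = Nm mg by nia.
  by split; apply: Nm_inj.
apply/negP => /eqP e.
have : (f * g)@_(mf * mg)%M = f@_mf * g@_mg.
  rewrite mcoeffMl (bigD1_seq mf) ?fset_uniq //= (bigD1_seq mg (r := msupp g)) ?fset_uniq //= eqxx mulr1n.
  rewrite big_seq_cond big1 ?addr0; last first.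
    move=> k2 /andP[k2g k2n]; case: eqP => [/(key _ _ mff k2g) [_ ek]|]; last by rewrite mulr0n.
    by rewrite ek eqxx in k2n.
  rewrite big_seq_cond big1 ?addr0 // => k1 /andP[k1f k1n].
  rewrite big_seq big1 // => k2 k2g; case: eqP => [/(key _ _ k1f k2g) [ek _]|]; last by rewrite mulr0n.
  by rewrite ek eqxx in k1n.
rewrite e mcoeff0 => /esym /eqP; rewrite mulf_eq0 !mcoeff_eq0 mff mgg.
done.
Qed.
End Dom.

Section Main.
Variables (k : fieldType) (n : nat) (s : {rmorphism k -> k}).
Local Notation R := (dpoly k n).
Local Notation M := (dmonom n).
Local Notation V := (dvar n).

Definition tau (v : V) : V := (v.1, v.2.+1).
Definition meets (m : M) (T : V -> Prop) := exists2 v, v \in finsupp m & T v.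
Definition PT (T : V -> Prop) (f : R) := forall m, m \in msupp f -> meets m T.
Definition stable (T : V -> Prop) := forall v, T v -> T (tau v).

Lemma dpoly_mul_neq0 (f g : R) : f != 0 -> g != 0 -> f * g != 0.
Proof.
apply: (@malg_mul_neq0 V (fun v : V => choice.pickle (v : 'I_n * nat))).
by move=> x y /(pcan_inj choice.pickleK).
Qed.

Lemma PT_ideal T : is_ideal (PT T).
Proof.
split.
- by move=> m; rewrite msupp0 in_fset0.
- move=> a b ha hb m /(fsubsetP (msuppD_le a b)); rewrite in_fsetU => /orP[/ha|/hb] //.
- move=> r a ha m /msuppM_le [k1 [k2 [_ k2a ->]]].
  have [v vk Tv] := ha _ k2a.
  by exists v => //; rewrite mdomD in_fsetU vk orbT.
Qed.

Lemma PT0 T : PT T 0. Proof. by case: (PT_ideal T). Qed.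
Lemma PTD T a b : PT T a -> PT T b -> PT T (a + b). Proof. by case: (PT_ideal T) => _ h _; apply: h. Qed.
Lemma PTM T r a : PT T a -> PT T (r * a). Proof. by case: (PT_ideal T) => _ _ h; apply: h. Qed.
Lemma PTMr T r a : PT T a -> PT T (a * r). Proof. by rewrite mulrC; apply: PTM. Qed.
Lemma PTB T a b : PT T a -> PT T b -> PT T (a - b).
Proof. by move=> ha hb; apply: PTD => //; rewrite -mulN1r; apply: PTM. Qed.

Lemma PT_dmono T m : meets m T -> PT T (dmono k m).
Proof. by move=> h m'; rewrite /dmono msuppU1 in_fset1 => /eqP ->. Qed.

Lemma dsigma_dX v : dsigma s (dX k v) = dX k (tau v).
Proof.
rewrite /dsigma mmapE /dX msuppU1 big_seq_fset1 mcoeffU1 eqxx /=.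
rewrite rmorph1 mpolyC1E mul1r mdomU big_seq_fset1 cmUU expr1.
reflexivity.
Qed.

Lemma PTX T x y e : PT T x -> PT T (x ^+ e.+1 * y).
Proof. by move=> h; rewrite exprS -mulrA; apply: PTMr. Qed.

Lemma PT_sigma T f : stable T -> PT T f -> PT T (dsigma s f).
Proof.
move=> st hf; rewrite /dsigma mmapE big_seq.
apply: (big_ind (PT T)); [exact: PT0 | exact: PTD |] => m mf.
apply: PTM.
have [v0 v0m Tv0] := hf _ mf.
rewrite (bigD1_seq v0) ?fset_uniq //=.
have : m v0 != 0%N by rewrite cmE_neq0.
case: (m v0) => [//|e] _.
apply: PTX; apply: PT_dmono; exists (tau v0); last exact: st.
by rewrite mdomU in_fset1.
Qed.
Definition avb T (m : M) : bool :=
  if excluded_middle_informative (meets m T) then false else true.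

Lemma avbP T m : avb T m = false <-> meets m T.
Proof. by rewrite /avb; case: excluded_middle_informative. Qed.

Lemma avbPn T m : avb T m -> ~ meets m T.
Proof. by rewrite /avb; case: excluded_middle_informative. Qed.

Definition AV T (f : R) := forall m, m \in msupp f -> ~ meets m T.

Lemma AV0 T : AV T 0. Proof. by move=> m; rewrite msupp0 in_fset0. Qed.
Lemma AVD T a b : AV T a -> AV T b -> AV T (a + b).
Proof. by move=> ha hb m /(fsubsetP (msuppD_le a b)); rewrite in_fsetU => /orP[/ha|/hb]. Qed.

Lemma AVM T a b : AV T a -> AV T b -> AV T (a * b).
Proof.
move=> ha hb m /msuppM_le [k1 [k2 [k1a k2b ->]]] [v].
rewrite mdomD in_fsetU => /orP[vk|vk] Tv.
  by apply: (ha _ k1a); exists v.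
by apply: (hb _ k2b); exists v.
Qed.

Lemma AVPT T f : AV T f -> PT T f -> f = 0.
Proof.
move=> ha hp; apply/eqP; rewrite -msupp_eq0; apply/eqP/fsetP => m.
rewrite in_fset0; apply/negP => hm; exact: (ha _ hm) (hp _ hm).
Qed.

Lemma split_av T (a : R) : exists a1 a2, [/\ a = a1 + a2, AV T a1 & PT T a2].
Proof.
exists (\sum_(m <- msupp a | avb T m) << a@_m *g m >>).
exists (\sum_(m <- msupp a | ~~ avb T m) << a@_m *g m >>).
split.
- by rewrite {1}(monalgE a) (bigID (avb T)).
- apply: (big_ind (AV T)); [exact: AV0 | exact: AVD |] => m /avbPn hm.
  by move=> m' /(fsubsetP msuppU_le); rewrite in_fset1 => /eqP ->.
- apply: (big_ind (PT T)); [exact: PT0 | exact: PTD |] => m /negbTE /avbP hm.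
  by move=> m' /(fsubsetP msuppU_le); rewrite in_fset1 => /eqP ->.
Qed.

Lemma PT_prime T a b : PT T (a * b) -> PT T a \/ PT T b.
Proof.
move=> hab.
have [a1 [a2 [ea av1 pt2]]] := split_av T a.
have [b1 [b2 [eb bv1 qt2]]] := split_av T b.
have e : a1 * b1 = a * b - (a1 * b2 + a2 * b) by rewrite ea eb; ring.
have h1 : PT T (a1 * b1).
  by rewrite e; apply: PTB => //; apply: PTD; [apply: PTM | apply: PTMr].
have := AVPT (AVM av1 bv1) h1 => /eqP z.
case: (eqVneq a1 0) => [a10|a1n].
  by left; rewrite ea a10 add0r.
case: (eqVneq b1 0) => [b10|b1n].
  by right; rewrite eb b10 add0r.
by move: z; rewrite (negbTE (dpoly_mul_neq0 a1n b1n)).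
Qed.

Lemma PT_radical T : is_radical (PT T).
Proof.
move=> a m; elim: m => [|m IH]; first by rewrite expr1.
by rewrite exprS => /PT_prime [|/IH].
Qed.

Lemma PT_wm T : stable T -> is_well_mixed s (PT T).
Proof.
move=> st a b /PT_prime [ha|hb]; first exact: PTMr.
by apply: PTM; apply: PT_sigma.
Qed.

End Main.

Section Main2.
Variables (k : fieldType) (n : nat) (s : {rmorphism k -> k}).
Local Notation R := (dpoly k n).
Local Notation M := (dmonom n).
Local Notation V := (dvar n).

Lemma dmonoM (m1 m2 : M) : dmono k (m1 * m2)%M = dmono k m1 * dmono k m2.
Proof. by rewrite /dmono malgM_def fgmulUU mulr1. Qed.

Lemma dmonoU (c : k) (m : M) : << c *g m >> = c%:MP * dmono k m :> R.
Proof. by rewrite malgM_def fgmulUU mulr1 mul1m. Qed.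

Lemma dmono1 : dmono k (1%M : M) = 1.
Proof. by []. Qed.

Definition tauk (j : nat) (v : V) : V := (v.1, (v.2 + j)%N).

Lemma tauk0 v : tauk 0 v = v.
Proof. by case: v => a b; rewrite /tauk /= addn0. Qed.

Lemma tau_tauk j v : tau (tauk j v) = tauk j.+1 v.
Proof. by rewrite /tau /tauk /= addnS. Qed.

Lemma cm_split (q : M) v : v \in finsupp q -> q = (divcm q (ucm v) * ucm v)%M.
Proof.
move=> vq; apply/eqP/cmP => w; rewrite cmM divcmE cmU.
case: (eqVneq v w) => [<-|_] /=; last by rewrite !subn0 addn0.
by rewrite subnK // lt0n cmE_neq0.
Qed.

Section W.
Variable W : R -> Prop.
Hypotheses (Wsi : is_sigma_ideal s W) (Wwm : is_well_mixed s W) (Wrad : is_radical W).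

Lemma W0 : W 0. Proof. by case: Wsi => [[]]. Qed.
Lemma WD a b : W a -> W b -> W (a + b). Proof. by case: Wsi => [[_ h _]] _; apply: h. Qed.
Lemma WM r a : W a -> W (r * a). Proof. by case: Wsi => [[_ _ h]] _; apply: h. Qed.

Lemma Wshift (p : M) v j : W (dmono k (p * ucm v)%M) -> W (dmono k (p * ucm (tauk j v))%M).
Proof.
elim: j => [|j IH]; first by rewrite tauk0.
move/IH; rewrite dmonoM => /Wwm.
by rewrite dsigma_dX dmonoM tau_tauk.
Qed.

Definition mpow (m : M) (d : nat) : M := iter d (mmul m) 1%M.

Lemma dmono_mpow m d : dmono k (mpow m d) = dmono k m ^+ d.
Proof. by elim: d => [|d IH]; rewrite ?expr0 // exprS /= dmonoM IH. Qed.

Lemma Wderiv (m : M) d : forall q p : M, mdeg q = d ->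
  (forall v, v \in finsupp q -> exists j, tauk j v \in finsupp m) ->
  W (dmono k (p * q)%M) -> W (dmono k (p * mpow m d)%M).
Proof.
elim: d => [|d IH] q p.
  by move=> /mdeg_eq0I -> _.
move=> dq hq Wpq.
have : finsupp q != fset0.
  apply/negP => /eqP e; move: dq; rewrite mdegE e big_seq_fset0 //.
case/fset0Pn => v vq.
have [j hj] := hq v vq.
set q' := divcm q (ucm v).
have eq := cm_split vq.
have em := cm_split hj.
have dq' : mdeg q' = d.
  by move: dq; rewrite {1}eq mdegM mdegU addn1 => /eqP; rewrite eqSS => /eqP e1; exact: e1.
have hq' : forall w, w \in finsupp q' -> exists j, tauk j w \in finsupp m.
  move=> w; rewrite -cmE_neq0 divcmE => h; apply: hq; rewrite -cmE_neq0.
  by apply: contra h => /eqP ->.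
have W1 : W (dmono k ((p * q') * ucm (tauk j v))%M).
  by apply: Wshift; rewrite -mulmA -eq.
have W2 : W (dmono k ((p * m) * q')%M).
  suff <- : ((divcm m (ucm (tauk j v))) * ((p * q') * ucm (tauk j v)))%M = ((p * m) * q')%M.
    by rewrite dmonoM; apply: WM.
  rewrite [in RHS]em; apply/eqP/cmP => i; rewrite !cmM; lia.
have := IH q' (p * m)%M dq' hq' W2.
suff -> : ((p * m) * mpow m d)%M = (p * mpow m d.+1)%M by [].
rewrite [mpow m d.+1]/mpow iterS -/(mpow m d).
apply/eqP/cmP => i; rewrite !cmM; lia.
Qed.

Lemma keyB (m : M) : ~ W (dmono k m) ->
  exists T, [/\ stable T, ~ meets m T & forall m', W (dmono k m') -> meets m' T].
Proof.
move=> nWm.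
exists (fun w => ~ exists j, tauk j w \in finsupp m); split.
- move=> w h [j hj]; apply: h; exists j.+1.
  by move: hj; rewrite /tau /tauk /= addSnnS.
- by case=> v vm; apply; exists 0%N; rewrite tauk0.
- move=> m' Wm'; apply: NNPP => nm.
  have hq : forall v, v \in finsupp m' -> exists j, tauk j v \in finsupp m.
    by move=> v vm; apply: NNPP => h; apply: nm; exists v.
  have := Wderiv (erefl _) hq (p := 1%M); rewrite !mul1m => /(_ Wm').
  rewrite dmono_mpow; case: (mdeg m') => [|d].
    by rewrite expr0 => W1; apply: nWm; rewrite -[dmono k m]mulr1; apply: WM.
  by move/Wrad.
Qed.
End W.
End Main2.

Section Main3.
Variables (k : fieldType) (n : nat) (s : {rmorphism k -> k}).
Local Notation R := (dpoly k n).
Local Notation M := (dmonom n).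
Local Notation V := (dvar n).

Lemma rwm_props (F : R -> Prop) :
  [/\ is_sigma_ideal s (rwm_closure s F), is_well_mixed s (rwm_closure s F)
    & is_radical (rwm_closure s F)].
Proof.
split.
- split; first split.
  + by move=> J [[h0 _ _] _] _ _ _.
  + by move=> a b ha hb J hJ w r hF; have [[_ hD _] _] := hJ; apply: hD; [apply: ha|apply: hb].
  + by move=> r a ha J hJ w rr hF; have [[_ _ hM] _] := hJ; apply: hM; apply: ha.
  + by move=> a ha J hJ w r hF; have [_ hs] := hJ; apply: hs; apply: ha.
- by move=> a b hab J hJ w r hF; exact: (w a b (hab J hJ w r hF)).
- by move=> a m ha J hJ w r hF; exact: (r a m (ha J hJ w r hF)).
Qed.

Lemma rwm_incl (F : R -> Prop) y : F y -> rwm_closure s F y.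
Proof. by move=> h J _ _ _ hF; apply: hF. Qed.

Definition TT (W : R -> Prop) (T : V -> Prop) :=
  stable T /\ forall m, W (dmono k m) -> meets m T.

Lemma monomial_in (I : R -> Prop) (W : R -> Prop) T :
  is_monomial_sigma_ideal s I -> (forall y, I y -> W y) ->
  (forall m, W (dmono k m) -> meets m T) -> forall y, I y -> PT T y.
Proof.
move=> [_ [Mg hI]] IW hT y /hI; apply; first exact: PT_ideal.
move=> p [m Mm ->]; apply: PT_dmono; apply: hT; apply: IW; apply/hI.
by move=> J _ hJ; apply: hJ; exists m.
Qed.

Theorem main (I J : R -> Prop) :
    is_monomial_sigma_ideal s I -> is_monomial_sigma_ideal s J ->
    forall x : R,
      rwm_closure s (ideal_add I J) x <->
      ideal_add (rwm_closure s I) (rwm_closure s J) x.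
Proof.
move=> mI mJ x.
set W1 := rwm_closure s I; set W2 := rwm_closure s J.
have [si1 wm1 rad1] := rwm_props I.
have [si2 wm2 rad2] := rwm_props J.
have I0 : I 0 by case: mI => [[[]]].
have J0 : J 0 by case: mJ => [[[]]].
split; last first.
  move=> [a [b [ha hb ->]]] K hK wK rK hF.
  have [[_ hD _] _] := hK; apply: hD.
  - apply: ha => // y Iy; apply: hF; exists y, 0; split => //; by rewrite addr0.
  - apply: hb => // y Jy; apply: hF; exists 0, y; split => //; by rewrite add0r.
pose Q (f : R) := forall T1 T2, TT W1 T1 -> TT W2 T2 -> PT (fun v => T1 v \/ T2 v) f.
move=> hx.
have Qx : Q x.
  apply: hx.
  - split; first split.
    + by move=> T1 T2 _ _; apply: PT0.
    + by move=> a b ha hb T1 T2 h1 h2; apply: PTD; [apply: ha|apply: hb].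
    + by move=> r a ha T1 T2 h1 h2; apply: PTM; apply: ha.
    + move=> a ha T1 T2 h1 h2; apply: PT_sigma; last exact: ha.
      by case: h1 => st1 _; case: h2 => st2 _ v [/st1|/st2]; [left|right].
  - move=> a b hab T1 T2 h1 h2; apply: PT_wm; last exact: hab.
    by case: h1 => st1 _; case: h2 => st2 _ v [/st1|/st2]; [left|right].
  - by move=> a m ha T1 T2 h1 h2; apply: (@PT_radical _ _ _ _ m); apply: ha.
  - move=> y [a [b [ha hb ->]]] T1 T2 [_ h1] [_ h2]; apply: PTD.
    + apply: (monomial_in mI (W := W1)) => //; first by move=> z; apply: rwm_incl.
      by move=> m /h1 [v vm Tv]; exists v => //; left.
    + apply: (monomial_in mJ (W := W2)) => //; first by move=> z; apply: rwm_incl.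
      by move=> m /h2 [v vm Tv]; exists v => //; right.
have hm : forall m, m \in msupp x -> W1 (dmono k m) \/ W2 (dmono k m).
  move=> m mx; apply: NNPP => h.
  have n1 : ~ W1 (dmono k m) by move=> h1; apply: h; left.
  have n2 : ~ W2 (dmono k m) by move=> h1; apply: h; right.
  have [T1 [st1 nm1 hT1]] := keyB si1 wm1 rad1 n1.
  have [T2 [st2 nm2 hT2]] := keyB si2 wm2 rad2 n2.
  have [v vm [Tv|Tv]] := Qx T1 T2 (conj st1 hT1) (conj st2 hT2) m mx.
    by apply: nm1; exists v.
  by apply: nm2; exists v.
pose b1 (m : M) : bool := if excluded_middle_informative (W1 (dmono k m)) then true else false.
exists (\sum_(m <- msupp x | b1 m) << x@_m *g m >>).
exists (\sum_(m <- msupp x | ~~ b1 m) << x@_m *g m >>).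
split; last by rewrite {1}(monalgE x) (bigID b1).
- rewrite big_seq_cond; apply: (big_ind W1); [exact: (W0 si1) | exact: (WD si1) |].
  move=> m /andP[_]; rewrite /b1; case: excluded_middle_informative => h hb; last by move: hb; rewrite /=.
  rewrite dmonoU; exact: (WM si1 _ h).
- rewrite big_seq_cond; apply: (big_ind W2); [exact: (W0 si2) | exact: (WD si2) |].
  move=> m /andP[mx]; rewrite /b1; case: excluded_middle_informative => h hb; first by exfalso; move/negP: hb; apply; reflexivity.
  have h2 : W2 (dmono k m) by case: (hm m mx).
  rewrite dmonoU; exact: (WM si2 _ h2).
Qed.
End Main3.

Theorem corollary5p13 (k : fieldType) (s : {rmorphism k -> k}) (n : nat) :
  [pchar k] =i pred0 ->
  forall I J : dpoly k n -> Prop,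
    is_monomial_sigma_ideal s I -> is_monomial_sigma_ideal s J ->
    forall x : dpoly k n,
      rwm_closure s (ideal_add I J) x <->
      ideal_add (rwm_closure s I) (rwm_closure s J) x.
Proof. by move=> _ I J mI mJ x; exact: main. Qed.
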